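(* Let $E$ be an $\mathbb{R}$-group, $X$ a locally compact (Hausdorff) space not reduced to one point, and $\mathcal{H}=(H_\varepsilon)_{\varepsilon\in E}$ a continuous absorptive action of $E$ on $X$ with center $\omega$. Then for every $x\in X$ with $x\neq\omega$, $H_\varepsilon(x)\to\infty$ as $\varepsilon\to\theta$, where $\infty$ is the point at infinity of the Alexandroff compactification of $X$; i.e., for every compact $K\subset X$ there exists $\alpha\in E$ such that $H_\varepsilon(x)\notin K$ for all $\varepsilon\in E$ with $\varepsilon\le\alpha$.
   Context: An $\mathbb{R}$-group is an abelian group $E$ (operation written multiplicatively) whose underlying set is a subset of $\mathbb{R}$ containing all positive integers, such that: (RG1) with the natural order of $\mathbb{R}$, $E$ is a totally ordered group; (RG2) with the topology induced from $\mathbb{R}$, $E$ is a locally compact group; (RG3) there is a nonconstant continuous homomorphism $h:E\to\mathbb{R}_+^*$ such that for every $\alpha\in E$ the set $\{\varepsilon\in E:\varepsilon\ge\alpha\}$ is integrable for $h\cdot m$, $m$ a Haar measure on $E$. $e$ is the identity of $E$, $\varepsilon^{-1}$ the group inverse, $\theta=\inf E\in\mathbb{R}\cup\{\pm\infty\}$; inequalities refer to the order of $\mathbb{R}$. An action of $E$ on $X$ is a family $(H_\varepsilon)_{\varepsilon\in E}$ of bijections of $X$ with $H_\varepsilon\circ H_{\varepsilon'}=H_{\varepsilon\varepsilon'}$, $H_e=\mathrm{id}_X$; continuous if $(\varepsilon,x)\mapsto H_\varepsilon(x)$ is continuous on $E\times X$; absorptive if some $\omega\in X$ satisfies (ABS):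 for every neighbourhood $V$ of $\omega$ and every $x\in X$ there are a neighbourhood $U$ of $x$ and $\alpha\in E$ with $H_{\varepsilon^{-1}}(U)\subset V$ for all $\varepsilon\le\alpha$. For a continuous absorptive action this $\omega$ is unique and called the center. *)

(* Defs.v *)
From Stdlib Require Import Reals List Classical.
Open Scope R_scope.

Record is_topology {X : Type} (op : (X -> Prop) -> Prop) : Prop := {
  top_full  : op (fun _ => True);
  top_inter : forall U V, op U -> op V -> op (fun x => U x /\ V x);
  top_union : forall F : (X -> Prop) -> Prop, (forall U, F U -> op U) ->
                op (fun x => exists U, F U /\ U x)
}.

Definition nbhd {X : Type} (op : (X -> Prop) -> Prop) (x : X) (V : X -> Prop) : Prop :=
  exists U, op U /\ U x /\ forall y, U y -> V y.

Definition hausdorff {X : Type} (op : (X -> Prop) -> Prop) : Prop :=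
  forall x y : X, x <> y -> exists U V, op U /\ op V /\ U x /\ V y /\
    forall z, ~ (U z /\ V z).

Definition compact_in {X : Type} (op : (X -> Prop) -> Prop) (K : X -> Prop) : Prop :=
  forall (I : Type) (U : I -> X -> Prop), (forall i, op (U i)) ->
    (forall x, K x -> exists i, U i x) ->
    exists l : list I, forall x, K x -> exists i, In i l /\ U i x.

Definition locally_compact {X : Type} (op : (X -> Prop) -> Prop) : Prop :=
  forall x : X, exists K, nbhd op x K /\ compact_in op K.

Definition cont_on (E : R -> Prop) (f : R -> R) : Prop :=
  forall a, E a -> forall eps, 0 < eps -> exists delta, 0 < delta /\
    forall b, E b -> Rabs (b - a) < delta -> Rabs (f b - f a) < eps.

(* compactly supported continuous functions on E (Stdlib [compact] on R;
   a subset of E is compact in E iff it is compact in R) *)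
Definition Cc (E : R -> Prop) (f : R -> R) : Prop :=
  cont_on E f /\ exists C, (forall x, C x -> E x) /\ compact C /\
    forall x, E x -> ~ C x -> f x = 0.

(* Haar integral (Bourbaki: a Haar measure is a nonzero positive
   left-invariant linear form on K(E)). *)
Definition haar_integral (E : R -> Prop) (mul : R -> R -> R)
    (I : (R -> R) -> R) : Prop :=
  (forall f g, Cc E f -> Cc E g -> I (fun x => f x + g x) = I f + I g) /\
  (forall c f, Cc E f -> I (fun x => c * f x) = c * I f) /\
  (forall f, Cc E f -> (forall x, E x -> 0 <= f x) -> 0 <= I f) /\
  (exists f, Cc E f /\ I f <> 0) /\
  (forall a f, E a -> Cc E f -> I (fun x => f (mul a x)) = I f).

(* {eps in E | eps >= alpha} is integrable for h.m : the upper integral of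
   h * indicator is finite, i.e. the integrals I(h f) over f in K(E) with
   0 <= f <= indicator of that set are bounded. *)
Definition RG3 (E : R -> Prop) (mul : R -> R -> R) : Prop :=
  exists h : R -> R,
    (forall a, E a -> 0 < h a) /\
    (forall a b, E a -> E b -> h (mul a b) = h a * h b) /\
    cont_on E h /\
    (exists a b, E a /\ E b /\ h a <> h b) /\
    exists I, haar_integral E mul I /\
      forall alpha, E alpha -> exists M, forall f, Cc E f ->
        (forall x, E x -> 0 <= f x <= 1) ->
        (forall x, E x -> x < alpha -> f x = 0) ->
        I (fun x => h x * f x) <= M.

Record R_group (E : R -> Prop) (mul : R -> R -> R) (inv : R -> R) (e : R) : Prop := {
  rg_e     : E e;
  rg_mulE  : forall a b, E a -> E b -> E (mul a b);
  rg_invE  : forall a, E a -> E (inv a);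
  rg_assoc : forall a b c, E a -> E b -> E c -> mul a (mul b c) = mul (mul a b) c;
  rg_comm  : forall a b, E a -> E b -> mul a b = mul b a;
  rg_id    : forall a, E a -> mul e a = a;
  rg_invl  : forall a, E a -> mul (inv a) a = e;
  rg_nat   : forall n : nat, (1 <= n)%nat -> E (INR n);
  rg_order : forall a b c, E a -> E b -> E c -> a <= b -> mul a c <= mul b c;
  rg_mul_cont : forall a b, E a -> E b -> forall eps, 0 < eps ->
      exists delta, 0 < delta /\ forall a' b', E a' -> E b' ->
        Rabs (a' - a) < delta -> Rabs (b' - b) < delta ->
        Rabs (mul a' b' - mul a b) < eps;
  rg_inv_cont : cont_on E inv;
  rg_loc_compact : forall a, E a -> exists delta, 0 < delta /\ exists C,
      (forall x, C x -> E x) /\ compact C /\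
      forall x, E x -> Rabs (x - a) < delta -> C x;
  rg_haar : RG3 E mul
}.

Definition is_action (E : R -> Prop) (mul : R -> R -> R) (e : R) {X : Type}
    (H : R -> X -> X) : Prop :=
  (forall a, E a -> forall y, exists x, H a x = y /\ forall x', H a x' = y -> x' = x) /\
  (forall a b, E a -> E b -> forall x, H a (H b x) = H (mul a b) x) /\
  (forall x, H e x = x).

Definition continuous_action (E : R -> Prop) {X : Type} (op : (X -> Prop) -> Prop)
    (H : R -> X -> X) : Prop :=
  forall a x, E a -> forall V, op V -> V (H a x) ->
    exists delta, 0 < delta /\ exists U, op U /\ U x /\
      forall a' x', E a' -> Rabs (a' - a) < delta -> U x' -> V (H a' x').

Definition absorbing_point (E : R -> Prop) (inv : R -> R) {X : Type}
    (op : (X -> Prop) -> Prop) (H : R -> X -> X) (w : X) : Prop :=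
  forall V x, nbhd op w V -> exists U alpha, nbhd op x U /\ E alpha /\
    forall eps, E eps -> eps <= alpha -> forall y, U y -> V (H (inv eps) y).

(* Main.v *)
Require Import Defs.
From Stdlib Require Import Reals List Classical Lra.
Open Scope R_scope.

Lemma fold_min (E : R -> Prop) (e : R) (l : list R) :
  E e -> (forall a, In a l -> E a) ->
  E (fold_right Rmin e l) /\ forall a, In a l -> fold_right Rmin e l <= a.
Proof.
  intros He. induction l as [|b l IH]; intros Hl; simpl.
  - split; [exact He | intros a []].
  - destruct IH as [IH1 IH2]. { intros a Ha; apply Hl; right; exact Ha. }
    split.
    + destruct (Rle_lt_dec b (fold_right Rmin e l)) as [h|h].
      * rewrite Rmin_left by exact h. apply Hl; left; reflexivity.
      * rewrite Rmin_right by lra. exact IH1.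
    + intros a [<-|Ha].
      * apply Rmin_l.
      * eapply Rle_trans; [apply Rmin_r | apply IH2; exact Ha].
Qed.

Theorem corollary2p2 (E : R -> Prop) (mul : R -> R -> R) (inv : R -> R) (e : R)
    (X : Type) (op : (X -> Prop) -> Prop) (H : R -> X -> X) (w : X) :
  R_group E mul inv e ->
  is_topology op -> hausdorff op -> locally_compact op ->
  (exists x y : X, x <> y) ->
  is_action E mul e H -> continuous_action E op H ->
  absorbing_point E inv op H w ->
  forall x : X, x <> w ->
  forall K : X -> Prop, compact_in op K ->
    exists alpha, E alpha /\ forall eps, E eps -> eps <= alpha -> ~ K (H eps x).
Proof.
  intros RG Top Haus LC Two Act Cont Abs x Hxw K HK.
  destruct (Haus x w Hxw) as (U & V & HU & HV & HUx & HVw & Hdis).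
  assert (HnV : nbhd op w V) by (exists V; repeat split; auto).
  set (P := fun p : (X -> Prop) * R => op (fst p) /\ E (snd p) /\
      forall eps, E eps -> eps <= snd p -> forall y, fst p y -> V (H (inv eps) y)).
  destruct (HK {p | P p} (fun p => fst (proj1_sig p))) as [l Hl].
  - intros [p Hp]; exact (proj1 Hp).
  - intros y Ky. destruct (Abs V y HnV) as (U0 & alpha & (U1 & HU1 & HU1y & HU10) & Ha & Hab).
    assert (Pp : P (U1, alpha)).
    { split; [exact HU1|split; [exact Ha|]]. simpl. intros eps He Hle z Hz.
      apply (Hab eps He Hle z); apply HU10; exact Hz. }
    exists (exist _ (U1, alpha) Pp). simpl. exact HU1y.
  - destruct (fold_min E e (map (fun p => snd (proj1_sig p)) l) (rg_e _ _ _ _ RG))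
      as [H1 H2].
    { intros a Ha. apply in_map_iff in Ha. destruct Ha as ([p Hp] & Heq & _). subst a.
      exact (proj1 (proj2 Hp)). }
    exists (fold_right Rmin e (map (fun p => snd (proj1_sig p)) l)). split; [exact H1|].
    intros eps He Hle HK'.
    destruct (Hl _ HK') as ([p Hp] & Hin & Hin2). simpl in Hin2.
    assert (Hle' : eps <= snd p).
    { eapply Rle_trans; [exact Hle|]. apply H2. apply in_map_iff.
      exists (exist _ p Hp); split; auto. }
    pose proof (proj2 (proj2 Hp)) as Hp2.
    pose proof (Hp2 eps He Hle' _ Hin2) as HV'.
    destruct Act as (_ & Hcomp & Hid).
    rewrite (Hcomp _ _ (rg_invE _ _ _ _ RG _ He) He), (rg_invl _ _ _ _ RG _ He), Hid in HV'.
    apply (Hdis x); split; assumption.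
Qed.
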